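(* Let $C$ be a finite-dimensional graded vector space with an $A_\infty$ coalgebra structure $\{\triangle_n\}$ and a nondegenerate symmetric bilinear form $\langle-,-\rangle$ of degree $-d$, and let $A=C^*=\mathrm{Hom}_k(C,k)$ with the dual $A_\infty$ algebra structure $\{\mu_n\}$ and the form transported along the isomorphism $C\to A$, $a\mapsto a^*=\langle-,a\rangle$. Then $C$ is a cyclic $A_\infty$ coalgebra if and only if $A$ is a cyclic $A_\infty$ algebra.
   Context: An $A_\infty$ coalgebra structure on a graded vector space $C$ is a sequence $\triangle_n:C\to C^{\otimes n}$ of degree $n-2$ with $\sum_{r+s+t=n}(-1)^{r+st}(\mathrm{id}^{\otimes r}\otimes\triangle_s\otimes\mathrm{id}^{\otimes t})\triangle_{r+1+t}=0$; an $A_\infty$ algebra structure on $A$ is $\mu_n:A^{\otimes n}\to A$ of degree $n-2$ with $\sum_{r+s+t=n}(-1)^{r+st}\mu_{r+1+t}(\mathrm{id}^{\otimes r}\otimes\mu_s\otimes\mathrm{id}^{\otimes t})=0$; the dual structure is $\mu_r(x_1,\dots,x_r)(a)=(x_1,\dots,x_r)(\triangle_r(a))$. A symmetric bilinear form of degree $-d$ is $\langle-,-\rangle:V\otimes V\to k[d]$ with $\langle v,w\rangle=(-1)^{|v||w|}\langle w,v\rangle$. $C$ is cyclic (of degree $-d$) if for all $a,b\in C$ and all $r$, writing $\triangle_r(a)=a^1\cdots a^r$, $\triangle_r(b)=b^1\cdots b^r$: $\langle a,b^1\rangle\, b^2\cdots b^r=(-1)^{r+|b^1|(|a|+r)}\langle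 b,a^r\rangle\, a^1\cdots a^{r-1}\in C^{\otimes(r-1)}$. $A$ is cyclic if $\langle\mu_n(a_1,\dots,a_n),a_{n+1}\rangle=(-1)^{n+|a_{n+1}|(|a_1|+\cdots+|a_n|)}\langle\mu_n(a_{n+1},a_1,\dots,a_{n-1}),a_n\rangle$ for all $n$ and all $a_i$. *)

(* Defs.v *)
(* Finite-dimensional graded vector spaces are modelled in
   coordinates: C = k^n with a homogeneous basis e_0..e_{n-1}, e_i of degree
   deg i. *)
From HB Require Import structures.
From mathcomp Require Import all_boot all_order all_algebra.
Set Implicit Arguments. Unset Strict Implicit. Unset Printing Implicit Defensive.
Import GRing.Theory Num.Theory.
Local Open Scope ring_scope.

Definition ai_sgnz (k : pzRingType) (e : int) : k := (-1) ^+ `|e|%N.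

Section Graded.
Variables (k : fieldType) (n : nat) (deg : 'I_n -> int).

Definition ai_degs (t : seq 'I_n) : int := \sum_(i <- t) deg i.

Definition ai_bvec (j : 'I_n) : 'I_n -> k := fun i => (i == j)%:R.

Definition ai_homC (v : 'I_n -> k) (p : int) : Prop :=
  forall i, v i != 0 -> deg i = p.

(* An element x of A = Hom_k(C,k) is given by its values x i = x(e_i);
   A^p = Hom(C^{-p}, k), so x is homogeneous of degree p iff it only
   pairs nontrivially with basis vectors of degree -p. *)
Definition ai_homA (x : 'I_n -> k) (p : int) : Prop :=
  forall i, x i != 0 -> deg i = - p.

Definition ai_homAs (xs : seq ('I_n -> k)) (ps : seq int) : Prop :=
  size ps = size xs /\
  forall j, (j < size xs)%N -> ai_homA (nth (fun _ => 0) xs j) (nth 0 ps j).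

(* ---------- the coalgebra structure ----------
   D r i t = coefficient of e_{t_1} (x) ... (x) e_{t_r} in triangle_r(e_i)
   (only used for r >= 1 and size t = r). *)
Definition ai_DeltaV (D : nat -> 'I_n -> seq 'I_n -> k) (r : nat)
  (v : 'I_n -> k) (t : seq 'I_n) : k :=
  \sum_(i < n) v i * D r i t.

Definition ai_Delta_degree (D : nat -> 'I_n -> seq 'I_n -> k) : Prop :=
  forall (r : nat) (i : 'I_n) (t : r.-tuple 'I_n), (0 < r)%N ->
    D r i t != 0 -> ai_degs t = deg i + r%:Z - 2.

(* coefficient at e_w of (id^{(x)r} (x) triangle_s (x) id^{(x)t}) triangle_{r+1+t} (e_i),
   with the Koszul sign (-1)^{|triangle_s| (|x_1|+...+|x_r|)}. *)
Definition ai_compo (D : nat -> 'I_n -> seq 'I_n -> k) (r s t : nat)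
  (i : 'I_n) (w : seq 'I_n) : k :=
  \sum_(j < n) D (r + 1 + t)%N i (take r w ++ j :: drop (r + s) w)
      * ai_sgnz k ((s%:Z - 2) * ai_degs (take r w))
      * D s j (take s (drop r w)).

Definition ai_Ainf_coalgebra (D : nat -> 'I_n -> seq 'I_n -> k) : Prop :=
  ai_Delta_degree D /\
  forall (N : nat) (i : 'I_n) (w : N.-tuple 'I_n), (0 < N)%N ->
    \sum_(0 <= r < N) \sum_(1 <= s < (N - r).+1)
       ai_sgnz k ((r + s * (N - r - s))%N%:Z) * ai_compo D r s (N - r - s) i w = 0.

Definition ai_form (G : 'M[k]_n) (v w : 'I_n -> k) : k :=
  \sum_(i < n) \sum_(j < n) v i * G i j * w j.

Definition ai_symmetric_form (G : 'M[k]_n) : Prop :=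
  forall v w p q, ai_homC v p -> ai_homC w q ->
    ai_form G v w = ai_sgnz k (p * q) * ai_form G w v.

Definition ai_form_of_degree (G : 'M[k]_n) (d : int) : Prop :=
  forall v w p q, ai_homC v p -> ai_homC w q -> ai_form G v w != 0 -> p + q = d.

Definition ai_nondegenerate (G : 'M[k]_n) : Prop :=
  forall v, (forall w, ai_form G w v = 0) -> forall i, v i = 0.

Definition ai_star (G : 'M[k]_n) (a : 'I_n -> k) : 'I_n -> k :=
  fun i => ai_form G (ai_bvec i) a.

Definition ai_transported (G : 'M[k]_n) (formA : ('I_n -> k) -> ('I_n -> k) -> k)
  : Prop :=
  forall a b, formA (ai_star G a) (ai_star G b) = ai_form G a b.

Definition ai_mu (D : nat -> 'I_n -> seq 'I_n -> k) (xs : seq ('I_n -> k))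
  : 'I_n -> k :=
  fun i => \sum_(t : (size xs).-tuple 'I_n)
     D (size xs) i t * \prod_(j < size xs) (nth (fun _ => 0) xs j) (tnth t j).

(* <a,b^1> b^2...b^r = (-1)^{r+|b^1|(|a|+r)} <b,a^r> a^1...a^{r-1},
   read summand-wise in the Sweedler sum of triangle_r(b) (the sign is
   attached to the summand carrying b^1 = e_j), evaluated at every basis
   tensor e_u of C^{(x)(r-1)}. *)
Definition ai_cyclic_coalgebra (D : nat -> 'I_n -> seq 'I_n -> k) (G : 'M[k]_n)
  : Prop :=
  forall (r : nat) (a b : 'I_n -> k) (p q : int), (0 < r)%N ->
    ai_homC a p -> ai_homC b q ->
    forall u : (r.-1).-tuple 'I_n,
      \sum_(j < n) ai_sgnz k (r%:Z + deg j * (p + r%:Z)) * ai_form G a (ai_bvec j)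
                     * ai_DeltaV D r b (j :: u)
      = \sum_(j < n) ai_form G b (ai_bvec j) * ai_DeltaV D r a (rcons u j).

(* <mu_N(a_1..a_N), a_{N+1}> =
     (-1)^{N + |a_{N+1}|(|a_1|+...+|a_N|)} <mu_N(a_{N+1},a_1..a_{N-1}), a_N>,
   with xs = [a_1..a_{N-1}], y = a_N, z = a_{N+1}. *)
Definition ai_cyclic_algebra (D : nat -> 'I_n -> seq 'I_n -> k)
  (formA : ('I_n -> k) -> ('I_n -> k) -> k) : Prop :=
  forall (xs : seq ('I_n -> k)) (ps : seq int) (y z : 'I_n -> k) (py pz : int),
    ai_homAs xs ps -> ai_homA y py -> ai_homA z pz ->
    formA (ai_mu D (rcons xs y)) z
    = ai_sgnz k ((size xs).+1%:Z + pz * (\sum_(p <- ps) p + py))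
      * formA (ai_mu D (z :: xs)) y.

End Graded.

(* Main.v *)
Require Import Defs.
From HB Require Import structures.
From mathcomp Require Import all_boot all_order all_algebra.
From mathcomp Require Import ring zify.
From Stdlib Require Import FunctionalExtensionality.
Set Implicit Arguments. Unset Strict Implicit. Unset Printing Implicit Defensive.
Import GRing.Theory Num.Theory.
Local Open Scope ring_scope.

Section Signs.
Variable k : fieldType.
Local Notation sg := (ai_sgnz k).

Lemma sgE (e : int) : sg e = (-1) ^ e.
Proof.
case: e => m; rewrite /ai_sgnz //=.
by rewrite -invr_sign.
Qed.

Lemma sgD a b : sg (a + b) = sg a * sg b.
Proof. by rewrite !sgE expfzDr // oppr_eq0 oner_eq0. Qed.

Lemma sgsq a : sg a * sg a = 1.
Proof. by rewrite /ai_sgnz -exprD addnn -mul2n exprM sqrrN !expr1n. Qed.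

Lemma sg2 a : sg (a + a) = 1.
Proof. by rewrite sgD sgsq. Qed.

Lemma sg0 : sg 0 = 1.
Proof. by []. Qed.
End Signs.
Section Main.
Variables (k : fieldType) (n : nat) (deg : 'I_n -> int)
  (D : nat -> 'I_n -> seq 'I_n -> k) (G : 'M[k]_n) (d : int)
  (formA : ('I_n -> k) -> ('I_n -> k) -> k).
Hypotheses (Hsym : ai_symmetric_form deg G) (Hfd : ai_form_of_degree deg G d)
  (Hnd : ai_nondegenerate G) (Htr : ai_transported G formA).
Local Notation sg := (ai_sgnz k).
Local Notation form := (ai_form G).
Local Notation bvec := (@ai_bvec k n).

Lemma formE1 i w : form (bvec i) w = \sum_j G i j * w j.
Proof.
rewrite /ai_form (bigD1 i) //= [X in _ + X]big1 ?addr0.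
  by apply eq_bigr => j _; rewrite /ai_bvec eqxx mul1r.
move=> l Hl; apply big1 => j _; by rewrite /ai_bvec (negbTE Hl) !mul0r.
Qed.

Lemma formE2 v j : form v (bvec j) = \sum_i v i * G i j.
Proof.
rewrite /ai_form; apply eq_bigr => i _; rewrite (bigD1 j) //= [X in _ + X]big1 ?addr0.
  by rewrite /ai_bvec eqxx mulr1.
by move=> l Hl; rewrite /ai_bvec (negbTE Hl) mulr0.
Qed.

Lemma formbb i j : form (bvec i) (bvec j) = G i j.
Proof.
rewrite formE1 (bigD1 j) //= [X in _ + X]big1 ?addr0; first by rewrite /ai_bvec eqxx mulr1.
by move=> l Hl; rewrite /ai_bvec (negbTE Hl) mulr0.
Qed.

Lemma homC_bvec i : ai_homC deg (bvec i) (deg i).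
Proof.
move=> l; rewrite /ai_bvec; case: (l =P i) => [-> //|_].
by rewrite eqxx.
Qed.

Lemma Gsym i j : G i j = sg (deg i * deg j) * G j i.
Proof. by rewrite -!formbb (Hsym (@homC_bvec i) (@homC_bvec j)). Qed.

Lemma Gdeg i j : G i j != 0 -> deg i + deg j = d.
Proof. by rewrite -formbb; apply: Hfd; apply: homC_bvec. Qed.

Lemma sum_nz (I : finType) (F : I -> k) : \sum_i F i != 0 -> exists i, F i != 0.
Proof.
move=> H; case: (pickP (fun i => F i != 0)) => [i Hi|H0]; first by exists i.
move: H; rewrite big1 ?eqxx // => i _; apply/eqP; move: (H0 i) => /= /negbT.
by rewrite negbK.
Qed.

Lemma mulnzl (x y : k) : x * y != 0 -> x != 0.
Proof. by apply: contra => /eqP ->; rewrite mul0r. Qed.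
Lemma mulnzr (x y : k) : x * y != 0 -> y != 0.
Proof. by apply: contra => /eqP ->; rewrite mulr0. Qed.

Lemma starE c i : ai_star G c i = \sum_j G i j * c j.
Proof. by rewrite /ai_star formE1. Qed.

Lemma star_hom c g : ai_homC deg c g -> ai_homA deg (ai_star G c) (g - d).
Proof.
move=> Hc i; rewrite starE => /sum_nz [j Hj].
have := Gdeg (mulnzl Hj); have := Hc _ (mulnzr Hj); lia.
Qed.

Lemma star_surj X : exists a, ai_star G a = X.
Proof.
have inj : forall v : 'cV[k]_n, G *m v = 0 -> v = 0.
  move=> v Hv; pose f : 'I_n -> k := fun j => v j 0.
  have Hs : forall w, form w f = 0.
    move=> w; rewrite /ai_form big1 // => i _.
    have : (G *m v) i 0 = 0 by rewrite Hv mxE.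
    rewrite mxE => Hi.
    rewrite (eq_bigr (fun j => w i * (G i j * v j 0))) => [|j _].
      by rewrite -mulr_sumr Hi mulr0.
    by rewrite mulrA.
  apply/matrixP => i j; rewrite ord1 mxE.
  by apply: (Hnd Hs).
have HU : G \in unitmx.
  rewrite unitmxE unitfE -det_tr; apply/negP => /det0P [w Hw0 Hw].
  have : G *m w^T = 0 by rewrite -[G]trmxK -trmx_mul Hw trmx0.
  move/inj => /(congr1 trmx); rewrite trmxK trmx0 => Hw'.
  by rewrite Hw' eqxx in Hw0.
exists (fun j => (invmx G *m \col_i X i) j 0).
apply: functional_extensionality => i; rewrite starE.
have H1 := mulKVmx HU (\col_i X i).
have H2 : (G *m (invmx G *m \col_i X i)) i 0 = (\col_i X i) i 0 by rewrite H1.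
by rewrite !mxE in H2; rewrite -H2.
Qed.


Lemma FA X c g : ai_homC deg c g ->
  formA X (ai_star G c) = sg (g * (d - g)) * \sum_i c i * X i.
Proof.
move=> Hc; have [a <-] := star_surj X; rewrite Htr /ai_form.
have -> : \sum_i c i * ai_star G a i = \sum_i \sum_j c j * (G j i * a i).
  by rewrite [RHS]exchange_big; apply eq_bigr => i _; rewrite starE mulr_sumr.
rewrite mulr_sumr; apply eq_bigr => i _; rewrite mulr_sumr; apply eq_bigr => j _.
case: (eqVneq (c j) 0) => [->|cj0]; first by rewrite mulr0 mul0r mulr0.
case: (eqVneq (G j i) 0) => [Gji|Gji].
  by rewrite (Gsym i j) Gji !(mulr0, mul0r).
have Hj := Hc j cj0; have Hd := Gdeg Gji.
have Hi : deg i = d - g by lia.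
rewrite (Gsym i j) Hi Hj [(d - g) * g]mulrC; ring.
Qed.

Definition proj (c : 'I_n -> k) g : 'I_n -> k :=
  fun i => if deg i == g then c i else 0.

Lemma preimA Z p : ai_homA deg Z p ->
  exists c, ai_homC deg c (d + p) /\ ai_star G c = Z.
Proof.
move=> HZ; have [c Hc] := star_surj Z; exists (proj c (d + p)); split.
  by move=> i; rewrite /proj; case: (deg i =P d + p) => [-> //|_]; rewrite eqxx.
apply functional_extensionality => i; rewrite starE.
case: (eqVneq (deg i) (- p)) => Hi.
  rewrite -Hc starE; apply eq_bigr => j _; rewrite /proj; case: (deg j =P d + p) => // Hj.
  case: (eqVneq (G i j) 0) => [->|Gij]; first by rewrite !mul0r.
  by have := Gdeg Gij => Hd; exfalso; lia.
have -> : Z i = 0.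
  by apply/eqP; apply: contraT => /HZ Hz; rewrite Hz eqxx in Hi.
rewrite big1 // => j _; rewrite /proj; case: (deg j =P d + p) => Hj; last by rewrite mulr0.
case: (eqVneq (G i j) 0) => [->|Gij]; first by rewrite !mul0r.
have := Gdeg Gij => Hd.
by exfalso; move/eqP: Hi; apply; lia.
Qed.


Lemma starSym b bt j : ai_homC deg b bt ->
  ai_star G b j = sg (bt * (d - bt)) * form b (bvec j).
Proof.
move=> Hb; rewrite /ai_star (Hsym (@homC_bvec j) Hb).
case: (eqVneq (form b (bvec j)) 0) => [->|Hnz]; first by rewrite !mulr0.
have Hd := Hfd Hb (@homC_bvec j) Hnz.
have -> : deg j = d - bt by lia.
by rewrite [(d - bt) * bt]mulrC.
Qed.

Variable x0 : 'I_n.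
Hypothesis Hdeg : ai_Delta_degree deg D.

Definition PP (xs : seq ('I_n -> k)) (t : seq 'I_n) : k :=
  \prod_(0 <= j < size xs) nth (fun _ => 0) xs j (nth x0 t j).

Lemma muE xs i : ai_mu D xs i =
  \sum_(t : (size xs).-tuple 'I_n) D (size xs) i t * PP xs t.
Proof.
rewrite /ai_mu; apply eq_bigr => t _; congr (_ * _).
by rewrite /PP big_mkord; apply eq_bigr => j _; rewrite (tnth_nth x0).
Qed.

Lemma sum_cons m (F : seq 'I_n -> k) :
  \sum_(t : m.+1.-tuple 'I_n) F t = \sum_j \sum_(u : m.-tuple 'I_n) F (j :: u).
Proof.
rewrite pair_big /=.
have bij : bijective (fun p : 'I_n * m.-tuple 'I_n => [tuple of p.1 :: p.2]).
  exists (fun t : m.+1.-tuple 'I_n => (thead t, [tuple of behead t])).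
    by case=> x u /=; congr (_, _); apply: val_inj.
  by move=> t; rewrite [RHS]tuple_eta.
by rewrite (reindex _ (onW_bij _ bij)).
Qed.

Lemma sum_rcons m (F : seq 'I_n -> k) :
  \sum_(t : m.+1.-tuple 'I_n) F t = \sum_j \sum_(u : m.-tuple 'I_n) F (rcons u j).
Proof.
have bij : bijective (fun t : m.+1.-tuple 'I_n => [tuple of rot 1 t]).
  exists (fun t : m.+1.-tuple 'I_n => [tuple of rotr 1 t]).
    by move=> t; apply: val_inj; rewrite /= rotK.
  by move=> t; apply: val_inj; rewrite /= rotrK.
rewrite (reindex _ (onW_bij _ bij)) /= (sum_cons m (fun t => F (rot 1 t))).
by apply eq_bigr => j _; apply eq_bigr => u _; rewrite rot1_cons.
Qed.

Lemma PP_cons z xs j u : PP (z :: xs) (j :: u) = z j * PP xs u.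
Proof. by rewrite /PP /= big_nat_recl. Qed.

Lemma PP_rcons xs y u j : size u = size xs ->
  PP (rcons xs y) (rcons u j) = PP xs u * y j.
Proof.
move=> Hu; rewrite /PP size_rcons big_nat_recr //= !nth_rcons Hu ltnn eqxx.
congr (_ * _); apply eq_big_nat => i /andP[_ Hi].
by rewrite !nth_rcons Hi Hu Hi.
Qed.

Lemma muR xs y i : ai_mu D (rcons xs y) i =
  \sum_j \sum_(u : (size xs).-tuple 'I_n) D (size xs).+1 i (rcons u j) * (PP xs u * y j).
Proof.
rewrite muE size_rcons.
rewrite (sum_rcons (size xs) (fun t => D (size xs).+1 i t * PP (rcons xs y) t)); apply eq_bigr => j _; apply eq_bigr => u _.
by rewrite PP_rcons // size_tuple.
Qed.

Lemma muC z xs i : ai_mu D (z :: xs) i =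
  \sum_j \sum_(u : (size xs).-tuple 'I_n) D (size xs).+1 i (j :: u) * (z j * PP xs u).
Proof.
rewrite muE /= (sum_cons (size xs) (fun t => D (size xs).+1 i t * PP (z :: xs) t)); apply eq_bigr => j _; apply eq_bigr => u _.
by rewrite PP_cons.
Qed.


Definition RC r c b (u : seq 'I_n) :=
  \sum_j form b (bvec j) * ai_DeltaV D r c (rcons u j).
Definition LR r c b (u : seq 'I_n) :=
  \sum_j form c (bvec j) * ai_DeltaV D r b (j :: u).

Lemma KEY_L xs c b g bt : ai_homC deg c g -> ai_homC deg b bt ->
  formA (ai_mu D (rcons xs (ai_star G b))) (ai_star G c)
  = sg (g * (d - g)) * sg (bt * (d - bt)) *
    \sum_(u : (size xs).-tuple 'I_n) PP xs u * RC (size xs).+1 c b u.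
Proof.
move=> Hc Hb; rewrite (FA _ Hc) -mulrA; congr (_ * _).
have -> : \sum_i c i * ai_mu D (rcons xs (ai_star G b)) i =
  \sum_i \sum_j \sum_(u : (size xs).-tuple 'I_n)
     c i * (D (size xs).+1 i (rcons u j) * (PP xs u * ai_star G b j)).
  by apply eq_bigr => i _; rewrite muR mulr_sumr; apply eq_bigr => j _; rewrite mulr_sumr.
rewrite exchange_big /=.
under eq_bigr => j _ do rewrite exchange_big.
rewrite exchange_big /= mulr_sumr; apply eq_bigr => u _.
rewrite /RC !mulr_sumr; apply eq_bigr => j _.
rewrite (starSym _ Hb) /ai_DeltaV (eq_bigr _ (fun i _ => mulrA _ _ _)) -mulr_suml; ring.
Qed.

Lemma KEY_R xs c b g bt : ai_homC deg c g -> ai_homC deg b bt ->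
  formA (ai_mu D (ai_star G c :: xs)) (ai_star G b)
  = sg (g * (d - g)) * sg (bt * (d - bt)) *
    \sum_(u : (size xs).-tuple 'I_n) PP xs u * LR (size xs).+1 c b u.
Proof.
move=> Hc Hb; rewrite (FA _ Hb) [sg (g * _) * _]mulrC -mulrA; congr (_ * _).
have -> : \sum_i b i * ai_mu D (ai_star G c :: xs) i =
  \sum_i \sum_j \sum_(u : (size xs).-tuple 'I_n)
     b i * (D (size xs).+1 i (j :: u) * (ai_star G c j * PP xs u)).
  by apply eq_bigr => i _; rewrite muC mulr_sumr; apply eq_bigr => j _; rewrite mulr_sumr.
rewrite exchange_big /=.
under eq_bigr => j _ do rewrite exchange_big.
rewrite exchange_big /= mulr_sumr; apply eq_bigr => u _.
rewrite /LR !mulr_sumr; apply eq_bigr => j _.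
rewrite (starSym _ Hc) /ai_DeltaV (eq_bigr _ (fun i _ => mulrA _ _ _)) -mulr_suml; ring.
Qed.

Lemma SIGN m (u : m.-tuple 'I_n) c b g bt pz py S :
  ai_homC deg c g -> ai_homC deg b bt -> g = d + pz -> bt = d + py ->
  S = - ai_degs deg u ->
  sg (m.+1%:Z + pz * (S + py)) * LR m.+1 c b u =
  \sum_j sg (m.+1%:Z + deg j * (g + m.+1%:Z)) * form c (bvec j)
          * ai_DeltaV D m.+1 b (j :: u).
Proof.
move=> Hc Hb Hg Hbt HS; rewrite /LR mulr_sumr; apply eq_bigr => j _.
case: (eqVneq (form c (bvec j)) 0) => [->|Hf]; first by rewrite !(mulr0, mul0r).
case: (eqVneq (ai_DeltaV D m.+1 b (j :: u)) 0) => [->|Hdv]; first by rewrite !mulr0.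
have Hdj := Hfd Hc (@homC_bvec j) Hf.
move: Hdv; rewrite /ai_DeltaV => /sum_nz [i Hi].
have Hbi := Hb i (mulnzl Hi).
have Ht := @Hdeg m.+1 i [tuple of j :: u] (ltn0Sn m) (mulnzr Hi).
have Hs : ai_degs deg (j :: u) = deg j + ai_degs deg u by rewrite /ai_degs big_cons.
have HE : m.+1%:Z + pz * (S + py) =
          (m.+1%:Z + deg j * (g + m.+1%:Z)) + ((g - d) + (g - d)).
  have Hsu : S = - (bt + m.+1%:Z - 2 - deg j).
    by move: Ht; rewrite /= Hs => Ht; lia.
  have Hpz : pz = g - d by lia.
  have Hpy : py = bt - d by lia.
  have Hj : deg j = d - g by lia.
  by rewrite Hsu Hpz Hpy Hj; ring.
by rewrite HE sgD sg2 mulr1 /ai_DeltaV; ring.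
Qed.


Lemma PPdeg xs ps (u : seq 'I_n) : ai_homAs deg xs ps -> size u = size xs ->
  PP xs u != 0 -> \sum_(p <- ps) p = - ai_degs deg u.
Proof.
move=> [Hsz Hh] Hu HP.
rewrite (big_nth 0) /ai_degs (big_nth x0) Hsz Hu -sumrN.
apply eq_big_nat => i /andP[_ Hi].
move: HP; rewrite /PP prodf_seq_neq0 => /allP /(_ i).
rewrite mem_index_iota Hi /= => /(_ isT) Hnz.
by rewrite (Hh i Hi _ Hnz) opprK.
Qed.

Lemma PPsum m (u : m.-tuple 'I_n) (F : seq 'I_n -> k) :
  \sum_(v : m.-tuple 'I_n) PP (map bvec u) v * F v = F u.
Proof.
have Hn : forall (v : seq 'I_n) i, (i < size u)%N ->
    nth (fun _ => 0) (map bvec u) i (nth x0 v i) = (nth x0 v i == nth x0 u i)%:R.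
  by move=> v i Hi; rewrite (nth_map x0).
rewrite (bigD1 u) //= [X in _ + X]big1 ?addr0.
  rewrite /PP big1_seq ?mul1r // => i; rewrite size_map mem_index_iota => /andP[_ Hi].
  by rewrite Hn // eqxx.
move=> v Hv; apply/eqP; rewrite mulf_eq0; apply/orP; left.
rewrite /PP prodf_seq_eq0; apply/hasP.
case: (boolP [exists i : 'I_m, nth x0 v i != nth x0 u i]) => [/existsP [i Hi]|Hno].
  exists (nat_of_ord i); first by rewrite mem_index_iota size_map size_tuple ltn_ord.
  by rewrite /= Hn ?size_tuple // (negbTE Hi) eqxx.
exfalso; move/negP: Hv; apply; apply/eqP; apply: val_inj.
apply: (eq_from_nth (x0 := x0)); first by rewrite !size_tuple.
move=> i; rewrite size_tuple => Hi; apply/eqP.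
by move: Hno; rewrite negb_exists => /forallP /(_ (Ordinal Hi)); rewrite negbK.
Qed.


Lemma cancel_sg a b s (x y : k) :
  sg a * sg b * x = s * (sg a * sg b * y) -> x = s * y.
Proof.
move=> H.
transitivity ((sg a * sg a) * (sg b * sg b) * x); first by rewrite !sgsq !mul1r.
transitivity ((sg a * sg b) * (sg a * sg b * x)); first by ring.
rewrite H.
transitivity ((sg a * sg a) * (sg b * sg b) * (s * y)); first by ring.
by rewrite !sgsq !mul1r.
Qed.

Lemma equiv : ai_cyclic_coalgebra deg D G <-> ai_cyclic_algebra deg D formA.
Proof.
split.
- move=> Hco xs ps y z py pz Hxs Hy Hz.
  have [b [Hb <-]] := preimA Hy; have [c [Hc <-]] := preimA Hz.
  rewrite (KEY_L xs Hc Hb) (KEY_R xs Hc Hb) [RHS]mulrCA; congr (_ * _).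
  rewrite mulr_sumr; apply eq_bigr => u _.
  case: (eqVneq (PP xs u) 0) => [->|HP]; first by rewrite !mul0r mulr0.
  have HS := PPdeg Hxs (size_tuple u) HP.
  rewrite mulrCA (@SIGN (size xs) u c b (d + pz) (d + py) pz py _ Hc Hb erefl erefl HS).
  by rewrite (Hco (size xs).+1 c b (d + pz) (d + py) (ltn0Sn _) Hc Hb u).
- move=> Hal r a b p q Hr Ha Hb; case: r Hr => [//|m] _ u.
  have Hxs : ai_homAs deg (map bvec u) (map (fun l => - deg l) u).
    split; first by rewrite !size_map.
    move=> j; rewrite size_map => Hj i.
    rewrite (nth_map x0) // (nth_map x0) // /ai_bvec.
    by case: (i =P nth x0 u j) => [->|_]; [rewrite opprK | rewrite eqxx].
  have := Hal _ _ _ _ _ _ Hxs (star_hom Hb) (star_hom Ha).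
  rewrite (KEY_L _ Ha Hb) (KEY_R _ Ha Hb) size_map size_tuple.
  rewrite (PPsum u (RC m.+1 a b)) (PPsum u (LR m.+1 a b)) => /cancel_sg H.
  have HS : \sum_(p0 <- map (fun l => - deg l) u) p0 = - ai_degs deg u.
    by rewrite big_map sumrN.
  have E1 : p = d + (p - d) by lia.
  have E2 : q = d + (q - d) by lia.
  by rewrite -(@SIGN m u a b p q (p - d) (q - d) _ Ha Hb E1 E2 HS) -H.
Qed.

End Main.

Theorem lemma4p2 (k : fieldType) (n : nat) (deg : 'I_n -> int)
  (D : nat -> 'I_n -> seq 'I_n -> k) (G : 'M[k]_n) (d : int)
  (formA : ('I_n -> k) -> ('I_n -> k) -> k) :
  ai_Ainf_coalgebra deg D ->
  ai_symmetric_form deg G -> ai_form_of_degree deg G d -> ai_nondegenerate G ->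
  ai_transported G formA ->
  (ai_cyclic_coalgebra deg D G <-> ai_cyclic_algebra deg D formA).
Proof.
case: n deg D G formA => [|n'] deg D G formA [Hdeg _] Hs Hf Hn Ht.
  split=> _; last first.
    by move=> r a b p q H1 H2 H3 u; rewrite !big_ord0.
  move=> xs ps y z py pz H1 H2 H3.
  have E : forall X : 'I_0 -> k, X = ai_star G (fun _ => 0).
    by move=> X; apply functional_extensionality => -[].
  by rewrite (E (ai_mu _ _)) (E z) (E y) (E (ai_mu _ _)) !Ht /ai_form !big_ord0 mulr0.
exact: (@equiv k n'.+1 deg D G d formA Hs Hf Hn Ht ord0 Hdeg).
Qed.
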